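(* Let $\theta=(\alpha,\beta,\sigma,\tau)$ with $\alpha,\beta\in\mathbb{R}$, $\sigma>0$, $\tau=\gamma\sigma$ for some $\gamma>0$. Let $F_N=\sum_{j=1}^N w_j\delta_{z_j}$ and $F'_{N'}=\sum_{j=1}^{N'}w'_j\delta_{z'_j}$ be probability measures on $\mathbb{R}$ and let $K=\min(N,N')$. Then \[ \|p_{\theta,F_N}-p_{\theta,F'_{N'}}\|_1\le 2\max_{1\le j\le K}\frac{\left(1+\frac{|\beta|}{\gamma}\right)|z_j-z'_j|}{\sigma}+\sum_{j=1}^K|w_j-w'_j|+\sum_{j=K+1}^N w_j+\sum_{j=K+1}^{N'}w'_j. \]
   Context: Errors-in-variables model: for $\theta=(\alpha,\beta,\sigma,\tau)$ and a probability measure $F$ on $\mathbb{R}$, $p_{\theta,F}(x,y)=\int\phi_\sigma(x-z)\,\phi_\tau(y-\alpha-\beta z)\,dF(z)$, where $\phi_s$ is the $N(0,s^2)$ density. $\|\cdot\|_1$ is the $L^1$ norm with respect to Lebesgue measure on $\mathbb{R}^2$. *)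

(* Defs.v *)
From HB Require Import structures.
From mathcomp Require Import all_boot all_order all_algebra.
From mathcomp Require Import all_classical all_reals all_analysis.
Set Implicit Arguments. Unset Strict Implicit. Unset Printing Implicit Defensive.
Import Order.TTheory GRing.Theory Num.Theory.
Local Open Scope ring_scope.

Definition phi {R : realType} (s x : R) : R := normal_pdf 0 s x.

(* p_{theta,F}(x,y) for theta = (a,b,s,t) and the discrete probability
   measure F = sum_{j<N} w j delta_{z j}; the integral against F is the
   finite weighted sum. *)
Definition p_mix {R : realType} (a b s t : R) (N : nat) (w z : nat -> R)
  (xy : R * R) : R :=
  \sum_(0 <= j < N) w j * (phi s (xy.1 - z j) * phi t (xy.2 - a - b * z j)).

Definition prob_weights {R : realType} (N : nat) (w : nat -> R) : Prop :=
  (forall j, (j < N)%N -> 0 <= w j) /\ \sum_(0 <= j < N) w j = 1.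

Definition L1norm2 {R : realType} (f : R * R -> R) : \bar R :=
  (\int[(@lebesgue_measure R \x @lebesgue_measure R)%E]_xy `|f xy|%:E)%E.

(* Main.v *)
Require Import Defs.
From HB Require Import structures.
From mathcomp Require Import all_boot all_order all_algebra.
From mathcomp Require Import all_classical all_reals all_analysis.
From mathcomp Require Import ring lra measurable_realfun.
Import Order.TTheory GRing.Theory Num.Theory.
Local Open Scope ring_scope.

Section S.
Context {R : realType}.
Notation mu := (@lebesgue_measure R).

Lemma phi_pdf (s c x : R) : 0 < s -> phi s (x - c) = normal_pdf c s x.
Proof.
move=> s0; rewrite /phi !normal_pdfE ?gt_eqF //= /normal_fun subr0 //.
Qed.

Lemma mphi (s c : R) : measurable_fun setT (fun x : R => phi s (x - c)).
Proof.
apply: (measurableT_comp (f := phi s)).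
  exact: measurable_normal_pdf.
by apply: measurable_funB.
Qed.

Lemma phi_ge0 (s x : R) : 0 <= phi s x.
Proof. exact: normal_pdf_ge0. Qed.

Lemma int_phi (s c : R) : 0 < s ->
  (\int[mu]_x (phi s (x - c))%:E = 1)%E.
Proof.
move=> s0; rewrite -(integral_normal_pdf c s); apply: eq_integral => x _.
by rewrite phi_pdf.
Qed.


Lemma phiE (s x : R) : 0 < s ->
  phi s x = normal_peak s * expR (- x ^+ 2 / (s ^+ 2 *+ 2)).
Proof. by move=> s0; rewrite /phi normal_pdfE ?gt_eqF //= /normal_fun subr0. Qed.

Lemma peak_scale (s t : R) : 0 < s -> 0 <= t ->
  normal_peak (s / (1 + t)) = (1 + t) * normal_peak s.
Proof.
move=> s0 t0; rewrite /normal_peak.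
have t1 : 0 < 1 + t by lra.
have -> : (s / (1 + t)) ^+ 2 * pi *+ 2 = ((1 + t)^-1) ^+ 2 * (s ^+ 2 * pi *+ 2).
  by field; rewrite gt_eqF.
rewrite sqrtrM ?sqr_ge0 // sqrtr_sqr ger0_norm ?invr_ge0 ?ltW //.
by rewrite invfM invrK.
Qed.

Lemma core_ineq (s t y e : R) : 0 < s -> 0 <= t -> `|e| = t * s ->
  (y + e) ^+ 2 <= (1 + t) ^+ 2 * y ^+ 2 + s ^+ 2 * (t ^+ 2 + t / 2).
Proof.
move=> s0 t0 he.
have h1 : e ^+ 2 = t ^+ 2 * s ^+ 2 by rewrite -[e ^+ 2]ger0_norm ?sqr_ge0 // normrX he exprMn.
have h2 : y * e <= `|y| * (t * s) by rewrite -he -normrM ler_norm.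
have h3 : 0 <= t * (`|y| - s / 2) ^+ 2 by rewrite mulr_ge0 ?sqr_ge0.
have h4 : 0 <= t ^+ 2 * y ^+ 2 by rewrite mulr_ge0 ?sqr_ge0.
have h5 : `|y| ^+ 2 = y ^+ 2 by rewrite real_normK ?num_real.
nra.
Qed.

Lemma exp_ineq (s t y e : R) : 0 < s -> 0 <= t -> `|e| = t * s ->
  - (t ^+ 2 + t / 2) / 2 - y ^+ 2 / ((s / (1 + t)) ^+ 2 *+ 2)
  <= - (y + e) ^+ 2 / (s ^+ 2 *+ 2).
Proof.
move=> s0 t0 he.
have t1 : 0 < 1 + t by lra.
have -> : - (t ^+ 2 + t / 2) / 2 - y ^+ 2 / ((s / (1 + t)) ^+ 2 *+ 2) =
  - ((1 + t) ^+ 2 * y ^+ 2 + s ^+ 2 * (t ^+ 2 + t / 2)) / (s ^+ 2 *+ 2).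
  by field; rewrite !gt_eqF.
rewrite !mulNr lerN2 ler_wpM2r // ?invr_ge0 ?mulrn_wge0 ?sqr_ge0 //.
exact: core_ineq.
Qed.


Lemma L1_phi (s u v : R) : 0 < s ->
  (\int[mu]_x (`|phi s (x - u) - phi s (x - v)|)%:E <= (2 * `|u - v| / s)%:E)%E.
Proof.
move=> s0.
pose t := `|u - v| / (2 * s).
pose m := (u + v) / 2.
pose s' := s / (1 + t).
pose lam := expR (- (t ^+ 2 + t / 2) / 2) / (1 + t).
have t0 : 0 <= t by rewrite /t divr_ge0 // mulr_ge0 // ltW.
have t1 : 0 < 1 + t by lra.
have s'0 : 0 < s' by rewrite /s' divr_gt0.
have lam0 : 0 <= lam by rewrite /lam divr_ge0 ?expR_ge0 // ltW.
have key : forall c x, `|m - c| = t * s -> lam * phi s' (x - m) <= phi s (x - c).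
  move=> c x hc.
  rewrite !phiE // /s' peak_scale // /lam.
  have -> : expR (- (t ^+ 2 + t / 2) / 2) / (1 + t) *
     ((1 + t) * normal_peak s * expR (- (x - m) ^+ 2 / ((s / (1 + t)) ^+ 2 *+ 2)))
     = normal_peak s * expR (- (t ^+ 2 + t / 2) / 2 - (x - m) ^+ 2 / ((s / (1 + t)) ^+ 2 *+ 2)).
    rewrite [in RHS]expRD mulNr; field; rewrite gt_eqF //.
  rewrite ler_wpM2l ?normal_peak_ge0 // ler_expR.
  have -> : x - c = (x - m) + (m - c) by rewrite addrA subrK.
  exact: exp_ineq.
have hu : `|m - u| = t * s.
  have -> : t * s = `|u - v| / 2 by rewrite /t; field; rewrite gt_eqF.
  rewrite /m; have -> : (u + v) / 2 - u = (v - u) / 2 by field.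
  by rewrite normrM distrC; congr (_ * _); rewrite ger0_norm // invr_ge0.
have hv : `|m - v| = t * s.
  have -> : t * s = `|u - v| / 2 by rewrite /t; field; rewrite gt_eqF.
  rewrite /m; have -> : (u + v) / 2 - v = (u - v) / 2 by field.
  by rewrite normrM; congr (_ * _); rewrite ger0_norm // invr_ge0.
pose F x := phi s (x - u) + phi s (x - v) - 2 * lam * phi s' (x - m).
have pw : forall x, `|phi s (x - u) - phi s (x - v)| <= F x.
  move=> x; have k1 := key u x hu; have k2 := key v x hv.
  rewrite /F ler_norml; apply/andP; split; lra.
have F0 : forall x, 0 <= F x.
  move=> x; have k1 := key u x hu; have k2 := key v x hv.
  have := phi_ge0 s' (x - m); rewrite /F; nra.
have mF : measurable_fun setT F.
  apply: measurable_funB; first by apply: measurable_funD; exact: mphi.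
  by apply: measurable_funM => //; exact: mphi.
have mf : measurable_fun setT (fun x : R => phi s (x - u) + phi s (x - v)).
  by apply: measurable_funD; exact: mphi.
have mh : measurable_fun setT (fun x : R => 2 * lam * phi s' (x - m)).
  by apply: measurable_funM => //; exact: mphi.
have E1 : (\int[mu]_x (phi s (x - u) + phi s (x - v))%:E = 2%:E)%E.
  under eq_integral do rewrite EFinD.
  rewrite ge0_integralD //; last 4 first.
  - by move=> x _; rewrite lee_fin phi_ge0.
  - by apply/measurable_EFinP; exact: mphi.
  - by move=> x _; rewrite lee_fin phi_ge0.
  - by apply/measurable_EFinP; exact: mphi.
  by rewrite !int_phi.
have E2 : (\int[mu]_x (2 * lam * phi s' (x - m))%:E = (2 * lam)%:E)%E.
  under eq_integral do rewrite EFinM.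
  rewrite ge0_integralZl //; last 3 first.
  - by apply/measurable_EFinP; exact: mphi.
  - by move=> x _; rewrite lee_fin phi_ge0.
  - by rewrite lee_fin mulr_ge0.
  by rewrite int_phi // mule1.
have E3 : (\int[mu]_x (phi s (x - u) + phi s (x - v))%:E =
   \int[mu]_x (F x)%:E + \int[mu]_x (2 * lam * phi s' (x - m))%:E)%E.
  rewrite -ge0_integralD //; last 4 first.
  - by move=> x _; rewrite lee_fin.
  - exact/measurable_EFinP.
  - by move=> x _; rewrite lee_fin mulr_ge0 ?phi_ge0 // mulr_ge0.
  - exact/measurable_EFinP.
  by apply: eq_integral => x _; rewrite -EFinD /F subrK.
have IF : (\int[mu]_x (F x)%:E = (2 - 2 * lam)%:E)%E.
  move: E3; rewrite E1 E2.
  have : (0 <= \int[mu]_x (F x)%:E)%E by apply: integral_ge0 => x _; rewrite lee_fin.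
  case: (\int[mu]_x (F x)%:E)%E => [r _ | _ | //].
  - by rewrite -EFinD => -[h]; congr EFin; lra.
  - by [].
apply: (@le_trans _ _ (\int[mu]_x (F x)%:E)%E).
  apply: ge0_le_integral => //.
  - apply/measurable_EFinP; apply: measurableT_comp => //.
    by apply: measurable_funB; exact: mphi.
  - exact/measurable_EFinP.
  - by move=> x _; rewrite lee_fin pw.
rewrite IF lee_fin.
have el : 1 + - ((t ^+ 2 + t / 2) / 2) <= expR (- (t ^+ 2 + t / 2) / 2).
  by rewrite -mulNr; exact: expR_ge1Dx.
have : 1 - 2 * t <= lam.
  rewrite /lam ler_pdivlMr //.
  nra.
have -> : 2 * `|u - v| / s = 4 * t.
  by rewrite /t; field; rewrite gt_eqF.
lra.
Qed.


Notation mu2 := ((@lebesgue_measure R) \x (@lebesgue_measure R))%E.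

Lemma mphi2 (s a c : R) : measurable_fun setT (fun x : R => phi s (x - a - c)).
Proof.
apply: (measurableT_comp (f := phi s)); first exact: measurable_normal_pdf.
by apply: measurable_funB => //; apply: measurable_funB.
Qed.

Lemma mprod (c : R) (f g : R -> R) : measurable_fun setT f -> measurable_fun setT g ->
  measurable_fun setT (fun z : R * R => c * f z.1 * g z.2).
Proof.
move=> mf mg; apply: measurable_funM; first apply: measurable_funM => //.
- exact: (measurableT_comp mf measurable_fst).
- exact: (measurableT_comp mg measurable_snd).
Qed.

Lemma int_prod (f g : R -> R) : measurable_fun setT f -> measurable_fun setT g ->
  (forall x, 0 <= f x) -> (forall y, 0 <= g y) ->
  (\int[mu2]_z (f z.1 * g z.2)%:E =
   \int[mu]_x (f x)%:E * \int[mu]_y (g y)%:E)%E.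
Proof.
move=> mf mg f0 g0.
have mfg : measurable_fun setT (fun z : R * R => (f z.1 * g z.2)%:E).
  apply/measurable_EFinP; apply: measurable_funM.
  - exact: (measurableT_comp mf measurable_fst).
  - exact: (measurableT_comp mg measurable_snd).
rewrite fubini_tonelli1 //; last by move=> z; rewrite lee_fin mulr_ge0.
rewrite /fubini_F /=.
transitivity (\int[mu]_x ((f x)%:E * \int[mu]_y (g y)%:E))%E.
  apply: eq_integral => x _.
  under eq_integral do rewrite EFinM.
  rewrite ge0_integralZl //.
  - exact/measurable_EFinP.
  - by move=> y _; rewrite lee_fin.
  - by rewrite lee_fin.
rewrite ge0_integralZr //.
- exact/measurable_EFinP.
- by move=> y _; rewrite lee_fin.
- by apply: integral_ge0 => y _; rewrite lee_fin.
Qed.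

Lemma int_prod_le (c a b : R) (f g : R -> R) : 0 <= c ->
  measurable_fun setT f -> measurable_fun setT g ->
  (forall x, 0 <= f x) -> (forall y, 0 <= g y) ->
  (\int[mu]_x (f x)%:E <= a%:E)%E -> (\int[mu]_y (g y)%:E <= b%:E)%E ->
  (\int[mu2]_z (c * f z.1 * g z.2)%:E <= (c * a * b)%:E)%E.
Proof.
move=> c0 mf mg f0 g0 fa gb.
under eq_integral do rewrite -mulrA (EFinM c).
have mfg : measurable_fun setT (fun z : R * R => (f z.1 * g z.2)%:E).
  apply/measurable_EFinP; apply: measurable_funM.
  + exact: (measurableT_comp mf measurable_fst).
  + exact: (measurableT_comp mg measurable_snd).
have fg0 : forall z : R * R, setT z -> (0 <= (f z.1 * g z.2)%:E)%E.
  by move=> z _; rewrite lee_fin mulr_ge0.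
rewrite ge0_integralZl //; try solve [exact: mfg | exact: fg0 | by rewrite lee_fin].
rewrite int_prod // -mulrA !EFinM.
apply: lee_wpmul2l; first by rewrite lee_fin.
apply: lee_pmul => //; by apply: integral_ge0 => y _; rewrite lee_fin.
Qed.

Lemma int_sum_le (I : eqType) (r : seq I) (F : I -> R * R -> R) (b : I -> R) :
  (forall i, measurable_fun setT (F i)) -> (forall i z, i \in r -> 0 <= F i z) ->
  (forall i, i \in r -> (\int[mu2]_z (F i z)%:E <= (b i)%:E)%E) ->
  (\int[mu2]_z (\sum_(i <- r) F i z)%:E <= (\sum_(i <- r) b i)%:E)%E.
Proof.
elim: r => [|a r IH] mF F0 Fb.
  rewrite big_nil integral0_eq //= => z _; by rewrite big_nil.
have ma : measurable_fun setT (fun z : R * R => (F a z)%:E) by apply/measurable_EFinP.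
have mr : measurable_fun setT (fun z : R * R => (\sum_(i <- r) F i z)%:E).
  by apply/measurable_EFinP; apply: measurable_sum.
have r0 : forall z, 0 <= \sum_(i <- r) F i z.
  move=> z; rewrite big_seq; apply: sumr_ge0 => i ir; apply: F0.
  by rewrite inE ir orbT.
under eq_integral do rewrite big_cons EFinD.
rewrite ge0_integralD //; try solve [exact: ma | exact: mr
  | by move=> z _; rewrite lee_fin ?r0 ?F0 ?mem_head].
rewrite big_cons EFinD; apply: leeD; first by apply: Fb; rewrite mem_head.
apply: IH => //.
- by move=> i z ir; apply: F0; rewrite inE ir orbT.
- by move=> i ir; apply: Fb; rewrite inE ir orbT.
Qed.

Lemma term_bd (w w' A A' B B' : R) : 0 <= w -> 0 <= A' -> 0 <= B -> 0 <= B' ->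
  `|w * (A * B) - w' * (A' * B')| <=
  w * `|A - A'| * B + w * A' * `|B - B'| + `|w - w'| * A' * B'.
Proof.
move=> w0 A0 B0 B'0.
have -> : w * (A * B) - w' * (A' * B') =
  w * (A - A') * B + w * A' * (B - B') + (w - w') * A' * B' by ring.
apply: (le_trans (ler_normD _ _)); apply: lerD; last first.
  by rewrite !normrM (ger0_norm A0) (ger0_norm B'0).
apply: (le_trans (ler_normD _ _)); apply: lerD.
  by rewrite !normrM (ger0_norm w0) (ger0_norm B0).
by rewrite !normrM (ger0_norm w0) (ger0_norm A0).
Qed.

Lemma int_add3_le (f1 f2 f3 : R * R -> R) (b1 b2 b3 : R) :
  measurable_fun setT f1 -> measurable_fun setT f2 -> measurable_fun setT f3 ->
  (forall z, 0 <= f1 z) -> (forall z, 0 <= f2 z) -> (forall z, 0 <= f3 z) ->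
  (\int[mu2]_z (f1 z)%:E <= b1%:E)%E ->
  (\int[mu2]_z (f2 z)%:E <= b2%:E)%E ->
  (\int[mu2]_z (f3 z)%:E <= b3%:E)%E ->
  (\int[mu2]_z (f1 z + f2 z + f3 z)%:E <= (b1 + b2 + b3)%:E)%E.
Proof.
move=> m1 m2 m3 p1 p2 p3 i1 i2 i3.
have m12 : measurable_fun setT (fun z : R * R => f1 z + f2 z) by apply: measurable_funD.
have e1 : measurable_fun setT (fun z : R * R => (f1 z)%:E) by apply/measurable_EFinP.
have e2 : measurable_fun setT (fun z : R * R => (f2 z)%:E) by apply/measurable_EFinP.
have e3 : measurable_fun setT (fun z : R * R => (f3 z)%:E) by apply/measurable_EFinP.
have e12 : measurable_fun setT (fun z : R * R => (f1 z + f2 z)%:E) by apply/measurable_EFinP.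
under eq_integral do rewrite EFinD.
rewrite ge0_integralD //; try solve [exact: e12 | exact: e3 | by move=> z _; rewrite lee_fin ?addr_ge0].
under eq_integral do rewrite EFinD.
rewrite ge0_integralD //; try solve [exact: e1 | exact: e2 | by move=> z _; rewrite lee_fin ?addr_ge0].
by rewrite !EFinD; apply: leeD => //; apply: leeD.
Qed.

End S.

Theorem mainTheorem12 (R : realType) (alpha beta sigma gamma : R)
  (N N' : nat) (w z w' z' : nat -> R) :
  0 < sigma -> 0 < gamma ->
  prob_weights N w -> prob_weights N' w' ->
  (L1norm2 (fun xy => (p_mix alpha beta sigma (gamma * sigma) N w z xy
                     - p_mix alpha beta sigma (gamma * sigma) N' w' z' xy)%R)
  <= (2 * \big[Num.max/0]_(0 <= j < minn N N')
          ((1 + `|beta| / gamma) * `|z j - z' j| / sigma)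
      + \sum_(0 <= j < minn N N') `|w j - w' j|
      + \sum_(minn N N' <= j < N) w j
      + \sum_(minn N N' <= j < N') w' j)%R%:E)%E.
Proof.
move=> s0 g0 [w0 w1] [w'0 w'1].
set K := minn N N'.
have KN : (K <= N)%N by rewrite /K geq_minl.
have KN' : (K <= N')%N by rewrite /K geq_minr.
set t := gamma * sigma.
have t0 : 0 < t by rewrite /t mulr_gt0.
pose A j x := phi sigma (x - z j).
pose A' j x := phi sigma (x - z' j).
pose B j y := phi t (y - alpha - beta * z j).
pose B' j y := phi t (y - alpha - beta * z' j).
pose H j (xy : R * R) := w j * `|A j xy.1 - A' j xy.1| * B j xy.2
  + w j * A' j xy.1 * `|B j xy.2 - B' j xy.2|
  + `|w j - w' j| * A' j xy.1 * B' j xy.2.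
pose T j (xy : R * R) := w j * A j xy.1 * B j xy.2.
pose T' j (xy : R * R) := w' j * A' j xy.1 * B' j xy.2.
have wK : forall j, (j < K)%N -> 0 <= w j.
  by move=> j jK; apply: w0; apply: leq_trans jK KN.
have pw : forall xy, `|p_mix alpha beta sigma t N w z xy - p_mix alpha beta sigma t N' w' z' xy|
   <= \sum_(0 <= j < K) H j xy + \sum_(K <= j < N) T j xy + \sum_(K <= j < N') T' j xy.
  move=> xy; rewrite /p_mix (@big_cat_nat _ _ _ K 0 N) // (@big_cat_nat _ _ _ K 0 N') // /=.
  rewrite opprD addrACA -sumrB -addrA.
  apply: (le_trans (ler_normD _ _)); apply: lerD.
    apply: (le_trans (ler_norm_sum _ _ _)); apply: ler_sum_nat => j /andP[_ jK].
    by apply: term_bd; rewrite ?phi_ge0 ?wK.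
  apply: (le_trans (ler_normB _ _)).
  rewrite !ger0_norm; last 2 first.
  - rewrite big_nat_cond; apply: sumr_ge0 => i /andP[/andP[_ iN] _].
    by rewrite mulr_ge0 ?w'0 // mulr_ge0 ?phi_ge0.
  - rewrite big_nat_cond; apply: sumr_ge0 => i /andP[/andP[_ iN] _].
    by rewrite mulr_ge0 ?w0 // mulr_ge0 ?phi_ge0.
  by apply: lerD; apply: ler_sum_nat => i _; rewrite /T /T' mulrA.
have mA : forall j, measurable_fun setT (A j) by move=> j; exact: mphi.
have mA' : forall j, measurable_fun setT (A' j) by move=> j; exact: mphi.
have mB : forall j, measurable_fun setT (B j) by move=> j; exact: mphi2.
have mB' : forall j, measurable_fun setT (B' j) by move=> j; exact: mphi2.
have mdA : forall j, measurable_fun setT (fun x => `|A j x - A' j x|).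
  by move=> j; apply: measurableT_comp => //; apply: measurable_funB.
have mdB : forall j, measurable_fun setT (fun x => `|B j x - B' j x|).
  by move=> j; apply: measurableT_comp => //; apply: measurable_funB.
have mH : forall j, measurable_fun setT (H j).
  move=> j; exact: (measurable_funD (measurable_funD (mprod (w j) _ _ (mdA j) (mB j))
    (mprod (w j) _ _ (mA' j) (mdB j))) (mprod `|w j - w' j| _ _ (mA' j) (mB' j))).
have mT : forall j, measurable_fun setT (T j) by move=> j; exact: (mprod _ _ _ (mA j) (mB j)).
have mT' : forall j, measurable_fun setT (T' j) by move=> j; exact: (mprod _ _ _ (mA' j) (mB' j)).
have IA : forall c, (\int[lebesgue_measure]_x (phi sigma (x - c))%:E <= 1%:E)%E.
  by move=> c; rewrite int_phi.
have IB : forall c, (\int[lebesgue_measure]_y (phi t (y - alpha - beta * c))%:E <= 1%:E)%E.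
  by move=> c; under eq_integral do rewrite -addrA -opprD; rewrite int_phi.
have IdA : forall j, (\int[lebesgue_measure]_x (`|A j x - A' j x|)%:E
    <= (2 * `|z j - z' j| / sigma)%:E)%E.
  by move=> j; exact: L1_phi.
have IdB : forall j, (\int[lebesgue_measure]_x (`|B j x - B' j x|)%:E
    <= (2 * `|(alpha + beta * z j) - (alpha + beta * z' j)| / t)%:E)%E.
  move=> j; rewrite /B /B'; under eq_integral do rewrite -!addrA -!opprD.
  exact: L1_phi.
pose b j := w j * (2 * `|z j - z' j| / sigma) * 1
  + w j * 1 * (2 * `|(alpha + beta * z j) - (alpha + beta * z' j)| / t)
  + `|w j - w' j| * 1 * 1.
have IH : forall j, j \in index_iota 0 K ->
    (\int[(lebesgue_measure \x lebesgue_measure)%E]_xy (H j xy)%:E <= (b j)%:E)%E.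
  move=> j; rewrite mem_index_iota => /andP[_ jK].
  apply: int_add3_le.
  - exact: (mprod _ _ _ (mdA j) (mB j)).
  - exact: (mprod _ _ _ (mA' j) (mdB j)).
  - exact: (mprod _ _ _ (mA' j) (mB' j)).
  - by move=> xy; rewrite mulr_ge0 ?phi_ge0 // mulr_ge0 ?wK.
  - by move=> xy; rewrite mulr_ge0 // mulr_ge0 ?phi_ge0 ?wK.
  - by move=> xy; rewrite mulr_ge0 ?phi_ge0 // mulr_ge0 ?phi_ge0.
  - apply: (@int_prod_le _ _ _ _ _ _ (wK j jK) (mdA j) (mB j)) => //; try solve [by move=> x; rewrite ?phi_ge0 | exact: IA | exact: IB | exact: IdA | exact: IdB].
  - apply: (@int_prod_le _ _ _ _ _ _ (wK j jK) (mA' j) (mdB j)) => //; try solve [by move=> x; rewrite ?phi_ge0 | exact: IA | exact: IB | exact: IdA | exact: IdB].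
  - apply: (@int_prod_le _ _ _ _ _ _ (normr_ge0 _) (mA' j) (mB' j)) => //; try solve [by move=> x; rewrite ?phi_ge0 | exact: IA | exact: IB | exact: IdA | exact: IdB].
have IT : forall j, j \in index_iota K N ->
    (\int[(lebesgue_measure \x lebesgue_measure)%E]_xy (T j xy)%:E <= (w j * 1 * 1)%:E)%E.
  move=> j; rewrite mem_index_iota => /andP[_ jN].
  apply: (@int_prod_le _ _ _ _ _ _ (w0 j jN) (mA j) (mB j)) => //; try solve [by move=> x; rewrite ?phi_ge0 | exact: IA | exact: IB | exact: IdA | exact: IdB].
have IT' : forall j, j \in index_iota K N' ->
    (\int[(lebesgue_measure \x lebesgue_measure)%E]_xy (T' j xy)%:E <= (w' j * 1 * 1)%:E)%E.
  move=> j; rewrite mem_index_iota => /andP[_ jN].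
  apply: (@int_prod_le _ _ _ _ _ _ (w'0 j jN) (mA' j) (mB' j)) => //; try solve [by move=> x; rewrite ?phi_ge0 | exact: IA | exact: IB | exact: IdA | exact: IdB].
have H0 : forall j xy, (j < K)%N -> 0 <= H j xy.
  move=> j xy jK; rewrite /H; apply: addr_ge0; first apply: addr_ge0.
  - by rewrite mulr_ge0 ?phi_ge0 // mulr_ge0 ?wK.
  - by rewrite mulr_ge0 // mulr_ge0 ?phi_ge0 ?wK.
  - by rewrite mulr_ge0 ?phi_ge0 // mulr_ge0 ?phi_ge0.
have T0 : forall j xy, (j < N)%N -> 0 <= T j xy.
  by move=> j xy jN; rewrite /T mulr_ge0 ?phi_ge0 // mulr_ge0 ?phi_ge0 ?w0.
have T'0 : forall j xy, (j < N')%N -> 0 <= T' j xy.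
  by move=> j xy jN; rewrite /T' mulr_ge0 ?phi_ge0 // mulr_ge0 ?phi_ge0 ?w'0.
have mG1 : measurable_fun setT (fun xy : R * R => \sum_(0 <= j < K) H j xy)
  by exact: measurable_sum.
have mG2 : measurable_fun setT (fun xy : R * R => \sum_(K <= j < N) T j xy)
  by exact: measurable_sum.
have mG3 : measurable_fun setT (fun xy : R * R => \sum_(K <= j < N') T' j xy)
  by exact: measurable_sum.
have G10 : forall xy, 0 <= \sum_(0 <= j < K) H j xy.
  move=> xy; rewrite big_nat_cond; apply: sumr_ge0 => i /andP[/andP[_ iK] _].
  exact: H0.
have G20 : forall xy, 0 <= \sum_(K <= j < N) T j xy.
  move=> xy; rewrite big_nat_cond; apply: sumr_ge0 => i /andP[/andP[_ iK] _].
  exact: T0.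
have G30 : forall xy, 0 <= \sum_(K <= j < N') T' j xy.
  move=> xy; rewrite big_nat_cond; apply: sumr_ge0 => i /andP[/andP[_ iK] _].
  exact: T'0.
have Hint : (\int[(lebesgue_measure \x lebesgue_measure)%E]_xy
     (\sum_(0 <= j < K) H j xy + \sum_(K <= j < N) T j xy + \sum_(K <= j < N') T' j xy)%:E
   <= (\sum_(0 <= j < K) b j + \sum_(K <= j < N) (w j * 1 * 1)
       + \sum_(K <= j < N') (w' j * 1 * 1))%:E)%E.
  apply: int_add3_le => //.
  - apply: int_sum_le => //.
    by move=> i xy; rewrite mem_index_iota => /andP[_ iK]; exact: H0.
  - apply: int_sum_le => //.
    by move=> i xy; rewrite mem_index_iota => /andP[_ iK]; exact: T0.
  - apply: int_sum_le => //.
    by move=> i xy; rewrite mem_index_iota => /andP[_ iK]; exact: T'0.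
have mP : measurable_fun setT (fun xy : R * R =>
    `|p_mix alpha beta sigma t N w z xy - p_mix alpha beta sigma t N' w' z' xy|).
  apply: measurableT_comp => //; apply: measurable_funB; apply: measurable_sum => j;
  apply: measurable_funM => //; apply: measurable_funM.
  - exact: (measurableT_comp (mA j) measurable_fst).
  - exact: (measurableT_comp (mB j) measurable_snd).
  - exact: (measurableT_comp (mA' j) measurable_fst).
  - exact: (measurableT_comp (mB' j) measurable_snd).
have emP : measurable_fun setT (fun xy : R * R =>
    (`|p_mix alpha beta sigma t N w z xy - p_mix alpha beta sigma t N' w' z' xy|)%:E)
  by apply/measurable_EFinP.
have emG : measurable_fun setT (fun xy : R * R =>
    (\sum_(0 <= j < K) H j xy + \sum_(K <= j < N) T j xy + \sum_(K <= j < N') T' j xy)%:E).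
  by apply/measurable_EFinP; apply: measurable_funD => //; apply: measurable_funD.
rewrite /L1norm2.
apply: (le_trans _ (le_trans Hint _)).
  apply: ge0_le_integral => //; try solve [exact: emP | exact: emG
    | by move=> xy _; rewrite lee_fin ?pw].
rewrite lee_fin.
set M := \big[Num.max/0]_(0 <= j < K) ((1 + `|beta| / gamma) * `|z j - z' j| / sigma).
have D0 : forall j, 0 <= (1 + `|beta| / gamma) * `|z j - z' j| / sigma.
  move=> j; apply: divr_ge0; last exact: ltW.
  apply: mulr_ge0 => //; apply: addr_ge0 => //; apply: divr_ge0 => //; exact: ltW.
have M0 : 0 <= M.
  rewrite /M; apply: (big_ind (fun x => 0 <= x)) => //.
  by move=> x y hx hy; rewrite le_max hx.
have DM : forall j, (j < K)%N -> (1 + `|beta| / gamma) * `|z j - z' j| / sigma <= M.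
  move=> j jK; rewrite /M.
  have : j \in index_iota 0 K by rewrite mem_index_iota.
  elim: (index_iota 0 K) => // a r IHr; rewrite inE big_cons le_max.
  by case/orP => [/eqP -> | /IHr ->]; rewrite ?lexx ?orbT.
have sw : \sum_(0 <= j < K) w j <= 1.
  rewrite -w1 (@big_cat_nat _ _ _ K 0 N) //= lerDl.
  rewrite big_nat_cond; apply: sumr_ge0 => i /andP[/andP[_ iN] _]; exact: w0.
have hS : \sum_(0 <= j < K) b j = \sum_(0 <= j < K) w j *
     (2 * ((1 + `|beta| / gamma) * `|z j - z' j| / sigma))
     + \sum_(0 <= j < K) `|w j - w' j|.
  rewrite -big_split; apply: eq_bigr => j _; rewrite /b.
  have -> : alpha + beta * z j - (alpha + beta * z' j) = beta * (z j - z' j) by ring.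
  rewrite normrM /t /=. field; do ?[apply/andP; split]; rewrite gt_eqF //.
have h1 : \sum_(K <= j < N) (w j * 1 * 1) = \sum_(K <= j < N) w j.
  by apply: eq_bigr => j _; rewrite !mulr1.
have h2 : \sum_(K <= j < N') (w' j * 1 * 1) = \sum_(K <= j < N') w' j.
  by apply: eq_bigr => j _; rewrite !mulr1.
have hW : \sum_(0 <= j < K) w j * (2 * ((1 + `|beta| / gamma) * `|z j - z' j| / sigma))
    <= 2 * M.
  apply: (@le_trans _ _ (\sum_(0 <= j < K) w j * (2 * M))).
    apply: ler_sum_nat => j /andP[_ jK]; apply: ler_wpM2l; first exact: wK.
    by rewrite ler_pM2l //; exact: DM.
  rewrite -mulr_suml; nra.
rewrite hS h1 h2; lra.
Qed.
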